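(* Let $\mathsf{K}$ be a quasivariety, $\mathbf{B}\in\mathsf{K}$, and $\mathbf{A}\leq\mathbf{B}$ full in $\mathsf{K}$. Then $\mathbf{A}\leq\mathbf{B}$ is not epic in $\mathsf{K}$ if and only if at least one of the following holds: (i) there are two distinct $\theta,\phi\in\mathrm{Con}_{\mathsf{K}}(\mathbf{B})$ with $\theta{\upharpoonright}_A=\phi{\upharpoonright}_A$; (ii) there are two distinct embeddings $g,h\colon\mathbf{B}\to\mathbf{C}$ with $\mathbf{C}\in\mathsf{K}_{\mathrm{RSI}}$ and $g{\upharpoonright}_A=h{\upharpoonright}_A$. Moreover, if (i) holds one may take $\theta=\mathrm{id}_B$.
   Context: A quasivariety is a class of similar algebras closed under isomorphic copies, subalgebras, direct products and ultraproducts. $\mathbf{A}\leq\mathbf{B}$ is epic in $\mathsf{K}$ if for all $\mathbf{C}\in\mathsf{K}$ and homomorphisms $g,h\colon\mathbf{B}\to\mathbf{C}$, $g{\upharpoonright}_A=h{\upharpoonright}_A$ implies $g=h$. $\mathrm{Con}_{\mathsf{K}}(\mathbf{B})$ is the set of congruences $\theta$ of $\mathbf{B}$ with $\mathbf{B}/\theta\in\mathsf{K}$; $\theta{\upharpoonright}_A=\theta\cap(A\times A)$. $\mathbf{A}\leq\mathbf{B}$ is full in $\mathsf{K}$ if it is proper, almost total ($B=\mathrm{Sg}^{\mathbf{B}}(A\cup\{b\})$ for some $b$), and for every $\theta\in\mathrm{Con}_{\mathsf{K}}(\mathbf{B})$ with $\theta\neq\mathrm{id}_B$ and every $b\in B$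 there is $a\in A$ with $\langle a,b\rangle\in\theta$. $\mathsf{K}_{\mathrm{RSI}}$ is the class of members $\mathbf{C}\in\mathsf{K}$ that are subdirectly irreducible relative to $\mathsf{K}$: for every subdirect embedding $f\colon\mathbf{C}\to\prod_{i\in I}\mathbf{B}_i$ with all $\mathbf{B}_i\in\mathsf{K}$ some $p_i\circ f$ is an isomorphism (trivial algebras are excluded). *)

(* Defs.v *)
From mathcomp Require Import ssreflect ssrfun ssrbool eqtype ssrnat fintype.
Set Implicit Arguments. Unset Strict Implicit. Unset Printing Implicit Defensive.

Record signature := Signature { op_sym : Type; arity : op_sym -> nat }.

Section UA.
Variable sig : signature.

Record algebra := Algebra {
  carrier :> Type;
  interp : forall o : op_sym sig, ('I_(arity o) -> carrier) -> carrier }.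

Definition is_hom (A B : algebra) (f : A -> B) : Prop :=
  forall (o : op_sym sig) (args : 'I_(arity o) -> A),
    f (interp args) = interp (fun k => f (args k)).

Definition surj (A B : Type) (f : A -> B) : Prop := forall y, exists x, f x = y.

Definition prod_alg (I : Type) (A : I -> algebra) : algebra :=
  @Algebra (forall i, A i) (fun o args i => interp (fun k => args k i)).

Definition proj (I : Type) (A : I -> algebra) (i : I) : prod_alg A -> A i :=
  fun x => x i.

Definition ultrafilter (I : Type) (U : (I -> Prop) -> Prop) : Prop :=
  [/\ U (fun _ => True), ~ U (fun _ => False),
      (forall X Y : I -> Prop, U X -> (forall i, X i -> Y i) -> U Y),
      (forall X Y : I -> Prop, U X -> U Y -> U (fun i => X i /\ Y i)) &
      (forall X : I -> Prop, U X \/ U (fun i => ~ X i))].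

(* K is closed under isomorphic copies and subalgebras (I and S: every algebra
   embeddable into a member of K is in K), direct products (P), and
   ultraproducts (Pu: every homomorphic image of a product whose kernel is the
   ultrafilter congruence, i.e. every isomorphic copy of an ultraproduct). *)
Definition quasivariety (K : algebra -> Prop) : Prop :=
  [/\ (forall (C D : algebra) (f : C -> D),
          is_hom f -> injective f -> K D -> K C),
      (forall (I : Type) (A : I -> algebra), (forall i, K (A i)) -> K (prod_alg A)) &
      (forall (I : Type) (A : I -> algebra) (U : (I -> Prop) -> Prop)
              (C : algebra) (f : prod_alg A -> C),
          ultrafilter U -> (forall i, K (A i)) -> is_hom f -> surj f ->
          (forall x y : prod_alg A, f x = f y <-> U (fun i => x i = y i)) ->
          K C)].

Definition subuniverse (B : algebra) (P : B -> Prop) : Prop :=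
  forall (o : op_sym sig) (args : 'I_(arity o) -> B),
    (forall k, P (args k)) -> P (interp args).

Definition Sg (B : algebra) (X : B -> Prop) : B -> Prop :=
  fun x => forall S : B -> Prop, subuniverse S -> (forall y, X y -> S y) -> S x.

Definition congruence (B : algebra) (th : B -> B -> Prop) : Prop :=
  [/\ (forall x, th x x), (forall x y, th x y -> th y x),
      (forall x y z, th x y -> th y z -> th x z) &
      (forall (o : op_sym sig) (a b : 'I_(arity o) -> B),
          (forall k, th (a k) (b k)) -> th (interp a) (interp b))].

(* theta \in Con_K(B): theta is a congruence and B/theta \in K, the quotient
   being represented (up to isomorphism) by a surjective homomorphism with
   kernel theta. *)
Definition ConK (K : algebra -> Prop) (B : algebra) (th : B -> B -> Prop) : Prop :=
  congruence th /\
  exists (C : algebra) (f : B -> C),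
    [/\ K C, is_hom f, surj f & forall x y, f x = f y <-> th x y].

Definition idrel (B : Type) : B -> B -> Prop := fun x y => x = y.

Definition restr_eq (B : Type) (A : B -> Prop) (th ph : B -> B -> Prop) : Prop :=
  forall a a', A a -> A a' -> (th a a' <-> ph a a').

Definition rel_distinct (B : Type) (th ph : B -> B -> Prop) : Prop :=
  exists x y, ~ (th x y <-> ph x y).

Definition epic (K : algebra -> Prop) (B : algebra) (A : B -> Prop) : Prop :=
  forall (C : algebra) (g h : B -> C), K C -> is_hom g -> is_hom h ->
    (forall a, A a -> g a = h a) -> forall x, g x = h x.

Definition full (K : algebra -> Prop) (B : algebra) (A : B -> Prop) : Prop :=
  [/\ (exists b, ~ A b),
      (exists b, forall x, Sg (fun y => A y \/ y = b) x) &
      (forall th, ConK K th -> rel_distinct th (@idrel B) ->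
         forall b, exists a, A a /\ th a b)].

Definition nontrivial (C : Type) : Prop := exists x y : C, x <> y.

Definition RSI (K : algebra -> Prop) (C : algebra) : Prop :=
  [/\ K C, nontrivial C &
      forall (I : Type) (D : I -> algebra) (f : C -> prod_alg D),
        (forall i, K (D i)) -> is_hom f -> injective f ->
        (forall i, surj (fun x => proj i (f x))) ->
        exists i, injective (fun x => proj i (f x))].
End UA.

(* Main.v *)
Require Import Defs.
From mathcomp Require Import ssreflect ssrfun ssrbool eqtype ssrnat fintype.
From Stdlib Require Import ClassicalEpsilon Classical FunctionalExtensionality PropExtensionality ProofIrrelevance.

From mathcomp Require classical_sets filter boolp.

Lemma ultra_ext (I : Type) (F : (I -> Prop) -> Prop) :
  F (fun _ => True) -> ~ F (fun _ => False) ->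
  (forall X Y, F X -> (forall i, X i -> Y i) -> F Y) ->
  (forall X Y, F X -> F Y -> F (fun i => X i /\ Y i)) ->
  exists U, ultrafilter U /\ forall X, F X -> U X.
Proof.
move=> FT FF FS FI.
have PF : filter.ProperFilter F.
  constructor; first exact: FF.
  constructor; [exact: FT | move=> X Y; exact: FI | move=> X Y H FX; exact: (FS _ _ FX H)].
have [G [UG sub]] := filter.ultraFilterLemma PF.
exists G; split; last exact: sub.
have GF : filter.Filter G by apply: filter.filter_filter.
split.
- exact: (@filter.filterT _ _ GF).
- exact: (@filter.filter_not_empty _ _ (@filter.ultra_proper _ _ UG)).
- move=> X Y GX XY; exact: (@filter.filterS _ _ GF X Y XY GX).
- move=> X Y; exact: (@filter.filterI _ _ GF X Y).
- move=> X; exact: (@filter.in_ultra_setVsetC _ G X UG).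
Qed.

Set Implicit Arguments. Unset Strict Implicit. Unset Printing Implicit Defensive.

Section Q.
Variable sig : signature.
Implicit Types X Y : algebra sig.

Lemma rel_ext (T : Type) (r s : T -> T -> Prop) :
  (forall x y, r x y <-> s x y) -> r = s.
Proof.
move=> H; apply: functional_extensionality => x; apply: functional_extensionality => y.
exact: propositional_extensionality.
Qed.

Lemma quotient_ex X (th : X -> X -> Prop) : congruence th ->
  exists (Q : algebra sig) (f : X -> Q),
    [/\ is_hom f, surj f & forall x y, f x = f y <-> th x y].
Proof.
case=> Hr Hs Ht Hc.
pose T := {S : X -> Prop | exists x, S = th x}.
pose cls (x : X) : T := exist _ (th x) (ex_intro _ x erefl).
pose rep (S : T) : X := proj1_sig (constructive_indefinite_description _ (proj2_sig S)).
have repP : forall S, proj1_sig S = th (rep S).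
  move=> S; rewrite /rep; case: (constructive_indefinite_description _ _) => //.
have clsE : forall x y, cls x = cls y <-> th x y.
  move=> x y; split.
    move=> /(f_equal (@proj1_sig _ _)) /= E; rewrite E; exact: Hr.
  move=> Hxy; apply: eq_sig_hprop; first by move=> ? ? ?; exact: proof_irrelevance.
  rewrite /=; apply: functional_extensionality => z; apply: propositional_extensionality; split => H.
    by apply: Ht (Hs _ _ Hxy) H.
  by apply: Ht Hxy H.
have clsrep : forall S, cls (rep S) = S.
  move=> S; apply: eq_sig_hprop; first by move=> ? ? ?; exact: proof_irrelevance.
  by rewrite /= -repP.
pose Q := @Algebra sig T (fun o args => cls (interp (fun k => rep (args k)))).
exists Q, cls; split.
- move=> o args /=; apply/clsE; apply: Hc => k.
  by apply/clsE; rewrite clsrep.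
- by move=> S; exists (rep S); exact: clsrep.
- exact: clsE.
Qed.


Variable K : algebra sig -> Prop.
Hypothesis QV : quasivariety K.

Lemma SK (C D : algebra sig) (f : C -> D) : is_hom f -> injective f -> K D -> K C.
Proof. by case: QV => H _ _; exact: H. Qed.

Lemma ConK_ker X Y (h : X -> Y) : K Y -> is_hom h -> ConK K (fun x y => h x = h y).
Proof.
move=> KY hh.
have cg : congruence (fun x y => h x = h y).
  split=> //; first by move=> x y z -> ->.
  move=> o a b H; rewrite !hh; congr interp; exact: functional_extensionality.
split=> //.
have [Q [f [hf sf kf]]] := quotient_ex cg.
exists Q, f; split=> //.
pose rep q := proj1_sig (constructive_indefinite_description _ (sf q)).
have repP : forall q, f (rep q) = q.
  by move=> q; rewrite /rep; case: (constructive_indefinite_description _ _).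
pose k q := h (rep q).
apply: (@SK _ _ k) => //.
- move=> o args; rewrite /k.
  have E : f (rep (interp args)) = f (interp (fun i => rep (args i))).
    by rewrite repP hf; congr interp; apply: functional_extensionality => i; rewrite repP.
  by move/kf: E => ->; rewrite hh.
- by move=> q1 q2; rewrite /k => /kf; rewrite !repP.
Qed.

Lemma ConK_ext X (th ph : X -> X -> Prop) :
  (forall x y, th x y <-> ph x y) -> ConK K th -> ConK K ph.
Proof. by move=> /rel_ext ->. Qed.

Lemma ConK_meet X (th ph : X -> X -> Prop) : ConK K th -> ConK K ph ->
  ConK K (fun x y => th x y /\ ph x y).
Proof.
move=> [_ [C1 [f1 [K1 h1 _ k1]]]] [_ [C2 [f2 [K2 h2 _ k2]]]].
pose D (b : bool) := if b then C1 else C2.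
pose m (x : X) : prod_alg D := fun b => match b return D b with true => f1 x | false => f2 x end.
have KP : K (prod_alg D).
  case: QV => _ HP _; apply: HP; by case.
have hm : is_hom m.
  move=> o args; apply: functional_extensionality_dep => -[] /=; [exact: h1 | exact: h2].
apply: ConK_ext (ConK_ker KP hm) => x y; split.
  move=> E; split; [apply/k1; exact: (f_equal (fun g => g true) E)
                   |apply/k2; exact: (f_equal (fun g => g false) E)].
move=> [/k1 E1 /k2 E2]; apply: functional_extensionality_dep => -[] /=; done.
Qed.

Lemma U_fin (I : Type) (U : (I -> Prop) -> Prop) : ultrafilter U ->
  forall n (P : 'I_n -> I -> Prop), (forall k, U (P k)) -> U (fun i => forall k, P k i).
Proof.
case=> UT _ US UI _ n P HP.
have : forall m, m <= n -> U (fun i => forall k : 'I_n, k < m -> P k i).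
  elim=> [|m IH] Hm.
    by apply: (US _ _ UT) => i _ k.
  have Hm' : m < n by [].
  apply: (US _ _ (UI _ _ (IH (ltnW Hm')) (HP (Ordinal Hm')))) => i [H1 H2] k.
  rewrite ltnS leq_eqVlt => /orP[/eqP E|]; last exact: H1.
  by have -> : k = Ordinal Hm' by apply: val_inj.
move=> /(_ n (leqnn n)) Hn; apply: (US _ _ Hn) => i H k; exact: H.
Qed.

Lemma ConK_chain X (Ch : (X -> X -> Prop) -> Prop) :
  (exists t, Ch t) -> (forall t, Ch t -> ConK K t) ->
  (forall s t, Ch s -> Ch t -> (forall x y, s x y -> t x y) \/ (forall x y, t x y -> s x y)) ->
  ConK K (fun x y => exists t, Ch t /\ t x y).
Proof.
move=> [t0 Ct0] HK Htot.
pose I := {t | Ch t}.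
have pick : forall i : I, {C : algebra sig & {f : X -> C |
    [/\ K C, is_hom f, surj f & forall x y, f x = f y <-> proj1_sig i x y]}}.
  move=> i; case: (constructive_indefinite_description _ (proj2 (HK _ (proj2_sig i)))) => C HC.
  case: (constructive_indefinite_description _ HC) => f Hf.
  exact: existT _ C (exist _ f Hf).
pose D i := projT1 (pick i).
pose f i : X -> D i := proj1_sig (projT2 (pick i)).
have fP : forall i, [/\ K (D i), is_hom (f i), surj (f i) & forall x y, f i x = f i y <-> proj1_sig i x y].
  move=> i; exact: (proj2_sig (projT2 (pick i))).
pose m (x : X) : prod_alg D := fun i => f i x.
have hm : is_hom m.
  move=> o args; apply: functional_extensionality_dep => i /=.
  by case: (fP i) => _ hf _ _; rewrite /m hf.
have KP : K (prod_alg D) by case: QV => _ HP _; apply: HP => i; case: (fP i).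
pose le (i j : I) := forall x y, proj1_sig i x y -> proj1_sig j x y.
pose F0 (S : I -> Prop) := exists i, forall j, le i j -> S j.
have [U [UU UF]] : exists U, ultrafilter U /\ forall S, F0 S -> U S.
  apply: ultra_ext.
  - by exists (exist _ t0 Ct0).
  - by move=> [i Hi]; apply: (Hi i) => x y.
  - by move=> S T [i Hi] ST; exists i => j /Hi; exact: ST.
  - move=> S T [i Hi] [j Hj].
    case: (Htot _ _ (proj2_sig i) (proj2_sig j)) => Hij.
      exists j => k Hk; split; [apply: Hi => x y /Hij; exact: Hk | exact: Hj].
    exists i => k Hk; split; [exact: Hi | apply: Hj => x y /Hij; exact: Hk].
have UU' := UU; case: UU' => UT UnF US UI _.
pose E (p q : prod_alg D) := U (fun i => p i = q i).
have cE : congruence E.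
  split.
  - by move=> p; apply: (US _ _ UT).
  - by move=> p q H; apply: (US _ _ H).
  - by move=> p q r H1 H2; apply: (US _ _ (UI _ _ H1 H2)) => i [-> ->].
  - move=> o a b H; have := U_fin UU H; move=> H'; apply: (US _ _ H') => i Hi /=.
    by congr interp; apply: functional_extensionality.
have [Z [g [hg sg kg]]] := quotient_ex cE.
have KZ : K Z.
  case: QV => _ _ HU; apply: (HU _ _ U _ g) => //.
  by move=> i; case: (fP i).
have hgm : is_hom (fun x => g (m x)).
  by move=> o args; rewrite hm hg.
apply: ConK_ext (ConK_ker KZ hgm) => x y; split.
  move=> /kg HE; apply: NNPP => Hn.
  apply: UnF; apply: (US _ _ HE) => i Hi; apply: Hn; exists (proj1_sig i); split.
    exact: proj2_sig i.
  by case: (fP i) => _ _ _ <-.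
move=> [t [Ct Ht]]; apply/kg; apply: UF.
exists (exist _ t Ct) => j Hj; case: (fP j) => _ _ _ ->; exact: Hj.
Qed.

Lemma ConK_idrel X : K X -> ConK K (fun x y : X => x = y).
Proof.
move=> KX; have h : is_hom (fun x : X => x) by [].
exact: (ConK_ker KX h).
Qed.

Lemma max_sep (C : algebra sig) (p q : C) : K C -> p <> q ->
  exists ps : C -> C -> Prop, [/\ ConK K ps, ~ ps p q &
    forall ph, ConK K ph -> ~ ph p q -> (forall x y, ps x y -> ph x y) ->
      forall x y, ph x y -> ps x y].
Proof.
move=> KC npq.
pose T := {ps : C -> C -> Prop | ConK K ps /\ ~ ps p q}.
pose R (s t : T) := boolp.asbool (forall x y, proj1_sig s x y -> proj1_sig t x y).
have [t Ht] : exists t, forall s, R t s -> s = t.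
  apply: classical_sets.Zorn.
  - by move=> s; apply/boolp.asboolP.
  - by move=> r s t /boolp.asboolP H1 /boolp.asboolP H2; apply/boolp.asboolP => x y /H1 /H2.
  - move=> s t /boolp.asboolP H1 /boolp.asboolP H2.
    apply: eq_sig_hprop; first by move=> ? ? ?; exact: proof_irrelevance.
    by apply: rel_ext => x y; split; [exact: H1|exact: H2].
  - move=> A Atot.
    case: (classic (exists s, A s)) => [[s0 As0]|nA]; last first.
      exists (exist _ (fun x y : C => x = y) (conj (ConK_idrel KC) npq)) => s As.
      by case: nA; exists s.
    pose Ch (t : C -> C -> Prop) := exists s, A s /\ proj1_sig s = t.
    have HC : ConK K (fun x y => exists t, Ch t /\ t x y).
      apply: ConK_chain.
      - by exists (proj1_sig s0), s0.
      - by move=> t [s [_ <-]]; case: (proj2_sig s).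
      - move=> t1 t2 [s1 [A1 <-]] [s2 [A2 <-]].
        by case: (Atot _ _ A1 A2) => /boolp.asboolP H; [left|right].
    have Hn : ~ (exists t, Ch t /\ t p q).
      by move=> [t [[s [_ <-]] H]]; case: (proj2_sig s) => _; apply.
    exists (exist (fun ps : C -> C -> Prop => ConK K ps /\ ~ ps p q) _ (conj HC Hn)) => s As; apply/boolp.asboolP => x y H /=.
    by exists (proj1_sig s); split => //; exists s.
exists (proj1_sig t); split; [by case: (proj2_sig t)|by case: (proj2_sig t)|].
move=> ph Hph nph Hle.
have := Ht (exist _ ph (conj Hph nph)); move=> H.
have E : exist _ ph (conj Hph nph) = t by apply: H; apply/boolp.asboolP.
by rewrite -E.
Qed.

Lemma RSI_quot (C : algebra sig) (p q : C) (ps : C -> C -> Prop) (Q : algebra sig) (f : C -> Q) :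
  ~ ps p q ->
  (forall ph, ConK K ph -> ~ ph p q -> (forall x y, ps x y -> ph x y) ->
      forall x y, ph x y -> ps x y) ->
  K Q -> is_hom f -> surj f -> (forall x y, f x = f y <-> ps x y) -> RSI K Q.
Proof.
move=> npq pmax KQ hf sf kf; split=> //.
  exists (f p), (f q) => /kf; exact: npq.
move=> I D m KD hm im _.
apply: NNPP => nI.
have all : forall i, proj i (m (f p)) = proj i (m (f q)).
  move=> i; apply: NNPP => ne; apply: nI; exists i.
  have hmi : is_hom (fun x => proj i (m (f x))).
    by move=> o args; rewrite /proj hf hm.
  have Hc := ConK_ker (KD i) hmi.
  have Hle : forall x y, ps x y -> proj i (m (f x)) = proj i (m (f y)).
    by move=> x y /kf ->.
  move=> a b Hab.
  case: (sf a) => x Ex; case: (sf b) => y Ey; subst a b.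
  apply/kf; exact: (pmax _ Hc ne Hle).
have : m (f p) = m (f q) by apply: functional_extensionality_dep; exact: all.
by move=> /im /kf.
Qed.
End Q.

Lemma not_distinct (T : Type) (r s : T -> T -> Prop) :
  ~ rel_distinct r s -> forall x y, r x y <-> s x y.
Proof. move=> H x y; apply: NNPP => n; apply: H; by exists x, y. Qed.

Theorem mainTheorem6 (sig : signature) (K : algebra sig -> Prop)
    (B : algebra sig) (A : B -> Prop) :
  quasivariety K -> K B -> subuniverse A -> full K A ->
  ((~ epic K A) <->
     ((exists th ph : B -> B -> Prop,
         [/\ ConK K th, ConK K ph, rel_distinct th ph & restr_eq A th ph]) \/
      (exists (C : algebra sig) (g h : B -> C),
         [/\ RSI K C, is_hom g /\ injective g, is_hom h /\ injective h,
             (exists x, g x <> h x) & (forall a, A a -> g a = h a)]))) /\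
  ((exists th ph : B -> B -> Prop,
      [/\ ConK K th, ConK K ph, rel_distinct th ph & restr_eq A th ph]) ->
   exists ph : B -> B -> Prop,
      [/\ ConK K ph, rel_distinct (@idrel B) ph & restr_eq A (@idrel B) ph]).
Proof.
move=> QV KB sA [[b0 nb0] _ Hfull].
have moreover : (exists th ph : B -> B -> Prop,
      [/\ ConK K th, ConK K ph, rel_distinct th ph & restr_eq A th ph]) ->
   exists ph : B -> B -> Prop,
      [/\ ConK K ph, rel_distinct (@idrel B) ph & restr_eq A (@idrel B) ph].
  move=> [th [ph [Cth Cph Hd Hr]]].
  pose ps x y := th x y /\ ph x y.
  have Cps : ConK K ps := ConK_meet QV Cth Cph.
  have [[Pr Ps Pt Pc] _] := Cps.
  have key : forall t, ConK K t -> (forall x y, ps x y -> t x y) ->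
      restr_eq A ps t -> rel_distinct ps t ->
      exists ph0 : B -> B -> Prop,
        [/\ ConK K ph0, rel_distinct (@idrel B) ph0 & restr_eq A (@idrel B) ph0].
    move=> t Ct le rt [u [v Huv]].
    have [[Tr Ts Tt Tc] _] := Ct.
    case: (classic (rel_distinct ps (@idrel B))) => [dps|ndps].
      exfalso; apply: Huv; split; first exact: le.
      move=> tuv.
      have [a [Aa pa]] := Hfull _ Cps dps u; have [a' [Aa' pa']] := Hfull _ Cps dps v.
      have taa : t a a' by apply: Tt (le _ _ pa) (Tt _ _ _ tuv (Ts _ _ (le _ _ pa'))).
      have paa := (proj2 (rt _ _ Aa Aa')) taa.
      exact: Pt (Ps _ _ pa) (Pt _ _ _ paa pa').
    have E := not_distinct ndps.
    exists t; split => //.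
      exists u, v => H; apply: Huv; split => [/(proj1 (E u v)) e|/H e].
        by apply/H.
      by apply/(E u v).
    move=> a a' Aa Aa'; rewrite -(rt _ _ Aa Aa'); split => [/(proj2 (E a a'))|/(proj1 (E a a'))] //.
  case: (classic (rel_distinct ps th)) => Hd1.
    apply: (key th Cth) => //; first by move=> x y [].
    move=> a a' Aa Aa'; split; first by case.
    by move=> H; split => //; apply/(Hr _ _ Aa Aa').
  apply: (key ph Cph) => //; first by move=> x y [].
    move=> a a' Aa Aa'; split; first by case.
    by move=> H; split => //; apply/(Hr _ _ Aa Aa').
  apply: NNPP => Hd2; case: Hd => x [y Hxy]; apply: Hxy.
  have E1 := not_distinct Hd1; have E2 := not_distinct Hd2.
  split => H; [apply/(proj1 (E2 x y))/(proj2 (E1 x y)) | apply/(proj1 (E1 x y))/(proj2 (E2 x y))]; exact: H.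
split; last exact: moreover.
split.
- move=> nepi.
  have [C [g [h [KC hg hh Ag [x nx]]]]] : exists (C : algebra sig) (g h : B -> C),
      [/\ K C, is_hom g, is_hom h, forall a, A a -> g a = h a & exists x, g x <> h x].
    apply: NNPP => H; apply: nepi => C g h KC hg hh Ag x; apply: NNPP => nx; apply: H.
    by exists C, g, h; split => //; exists x.
  have [ps [Cps nps pmax]] := max_sep QV KC nx.
  have [_ [Q [q [KQ hq sq kq]]]] := Cps.
  have hg' : is_hom (fun y => q (g y)) by move=> o args; rewrite hg hq.
  have hh' : is_hom (fun y => q (h y)) by move=> o args; rewrite hh hq.
  have Cg := ConK_ker QV KQ hg'; have Ch := ConK_ker QV KQ hh'.
  case: (classic (rel_distinct (fun u v => q (g u) = q (g v)) (fun u v => q (h u) = q (h v)))) => Hd.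
    left; exists (fun u v => q (g u) = q (g v)), (fun u v => q (h u) = q (h v)); split => //.
    by move=> a a' Aa Aa'; rewrite !Ag.
  have E := not_distinct Hd.
  case: (classic (rel_distinct (fun u v => q (g u) = q (g v)) (@idrel B))) => Hg.
    exfalso; have [a [Aa Ha]] := Hfull _ Cg Hg x.
    have Hb := (proj1 (E a x)) Ha.
    apply: nps; apply/kq; by rewrite -Ha Ag.
  have Eg := not_distinct Hg.
  right; exists Q, (fun y => q (g y)), (fun y => q (h y)); split.
  + exact: (RSI_quot QV nps pmax KQ hq sq kq).
  + by split => // u v /(proj1 (Eg u v)).
  + by split => // u v /(proj2 (E u v)) /(proj1 (Eg u v)).
  + by exists x => /kq.
  + by move=> a Aa; rewrite Ag.
- case=> [Hi|Hii].
  + have [ph [Cph [u [v Huv]] rph]] := moreover Hi.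
    move=> epi.
    have [[Pr Ps Pt Pc] _] := Cph.
    have dph : rel_distinct ph (@idrel B).
      exists u, v => H; apply: Huv; split => [/(proj2 (H)) | /(proj1 H)] //.
    pose r y := proj1_sig (constructive_indefinite_description _ (Hfull _ Cph dph y)).
    have rP : forall y, A (r y) /\ ph (r y) y.
      by move=> y; rewrite /r; case: (constructive_indefinite_description _ _).
    have rA : forall a, A a -> r a = a.
      by move=> a Aa; apply: (proj2 (rph _ _ (proj1 (rP a)) Aa)); exact: (proj2 (rP a)).
    have hr : is_hom r.
      move=> o args.
      apply: (proj2 (rph _ _ (proj1 (rP _)) (sA _ _ (fun k => proj1 (rP (args k)))))).
      apply: Pt (proj2 (rP _)) (Ps _ _ (Pc _ _ _ (fun k => proj2 (rP (args k))))).
    have hid : is_hom (fun y : B => y) by [].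
    have ep := epi B (fun y => y) r KB hid hr (fun a Aa => esym (rA a Aa)).
    apply: Huv; split => [->|H]; first exact: Pr.
    rewrite (ep u) (ep v); apply: (proj2 (rph _ _ (proj1 (rP u)) (proj1 (rP v)))).
    exact: Pt (proj2 (rP u)) (Pt _ _ _ H (Ps _ _ (proj2 (rP v)))).
  + move: Hii => [C [g [h [HR Hg Hh [x nx] Ag]]]] epi.
    case: HR => KC _ _; case: Hg => hg _; case: Hh => hh _.
    by apply: nx; exact: epi C g h KC hg hh Ag x.
Qed.
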